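(* There is an absolute constant $c>0$ such that for all $n$, $p\in(0,1)$, $q\in(0,1]$ and $\epsilon>0$, $$\mathrm{CCU}^{\mu_p}_{\frac12-\epsilon}(\mathcal F_q)\ge\mathrm{CC}^{\nu_{p,q}}_{\frac12-\epsilon+\epsilon'}(F),\qquad\epsilon'=2^{-cqn}.$$
   Context: For $S\subseteq[n]$, $f_S(x,y)=\bigoplus_{i\in S}(x_i\oplus y_i)$. $\mathcal F_q=\{(f_S,f_T): |S\triangle T|\le qn\}$. $\mu_p$: $x$ uniform in $\{0,1\}^n$, $y$ obtained from $x$ by flipping each bit independently with probability $p$. $\nu_{p,q}$ is the distribution on Alice-input $(S,x)$ and Bob-input $(T,y)$ ($S,T\subseteq[n]$, $x,y\in\{0,1\}^n$) where $S$ is a uniformly random subset of $[n]$, $T$ is obtained from $S$ by flipping the membership of each $i\in[n]$ independently with probability $q/2$, and $(x,y)\sim\mu_p$ independently of $(S,T)$. $F((S,x),(T,y))=f_T(x,y)=\bigoplus_{i\in T}(x_i\oplus y_i)$. $\mathrm{CC}^{\nu}_\epsilon(F)$ is the minimum communication of a (two-way) protocol between Alice and Bob whose output differs from $F$ with probability at most $\epsilon$ under $\nu$. Uncertain setting: Alice receives $(f,x)$, Bob receives $(g,y)$, with shared public randomness; a public-coin protocol $\epsilon$-computes $\mathcal F$ under $\mu$ if for every $(f,g)\in\mathcal F$ the probability over $(x,y)\sim\mu$ and coins that Bob's output differs from $g(x,y)$ is at most $\epsilon$; $\mathrm{CCU}^\mu_\epsilon(\mathcal F)$ is the minimum over such protocols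 of the worst-case number of bits communicated over all $(f,g)\in\mathcal F$, $(x,y)$ in the support of $\mu$ and coin settings. *)

(* Defs.v *)
From mathcomp Require Import all_boot.
From Stdlib Require Import Reals.

Set Implicit Arguments.
Unset Strict Implicit.
Unset Printing Implicit Defensive.

Definition Rsum (T : finType) (F : T -> R) : R := \big[Rplus/R0]_(x : T) F x.

(* A protocol tree: internal nodes are Alice or Bob sending one bit that depends
   on its own input (and, through the position in the tree, on the transcript);
   at a leaf, Bob outputs a bit depending on the transcript (leaf) and his input. *)
Inductive proto (A B : Type) : Type :=
| Out   of (B -> bool)
| ASend of (A -> bool) & proto A B & proto A B
| BSend of (B -> bool) & proto A B & proto A B.

Arguments Out {A B}.
Arguments ASend {A B}.
Arguments BSend {A B}.

Fixpoint run (A B : Type) (t : proto A B) (a : A) (b : B) : bool :=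
  match t with
  | Out o => o b
  | ASend f t0 t1 => if f a then run t1 a b else run t0 a b
  | BSend g t0 t1 => if g b then run t1 a b else run t0 a b
  end.

Fixpoint bits (A B : Type) (t : proto A B) (a : A) (b : B) : nat :=
  match t with
  | Out _ => 0
  | ASend f t0 t1 => (if f a then bits t1 a b else bits t0 a b).+1
  | BSend g t0 t1 => (if g b then bits t1 a b else bits t0 a b).+1
  end.

Definition bv (n : nat) := {ffun 'I_n -> bool}.

Definition hamming (n : nat) (x y : bv n) : nat := #|[set i | x i != y i]|.
Definition symdiff (n : nat) (S T : {set 'I_n}) : {set 'I_n} := (S :\: T) :|: (T :\: S).

Definition fS (n : nat) (S : {set 'I_n}) (x y : bv n) : bool :=
  \big[addb/false]_(i in S) (x i (+) y i).

Definition fSfun (n : nat) (S : {set 'I_n}) : {ffun bv n * bv n -> bool} :=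
  [ffun xy => fS S xy.1 xy.2].

Definition Fq (n : nat) (q : R) (f g : {ffun bv n * bv n -> bool}) : Prop :=
  exists S T : {set 'I_n},
    f = fSfun S /\ g = fSfun T /\ (INR #|symdiff S T| <= q * INR n)%R.

(* mu_p(x,y): x uniform, y = x with each bit flipped independently w.p. p *)
Definition mu (n : nat) (p : R) (x y : bv n) : R :=
  (/ 2 ^ n * p ^ hamming x y * (1 - p) ^ (n - hamming x y)%nat)%R.

Definition nu (n : nat) (p q : R) (Sx Ty : {set 'I_n} * bv n) : R :=
  (/ 2 ^ n * (q / 2) ^ #|symdiff Sx.1 Ty.1| * (1 - q / 2) ^ (n - #|symdiff Sx.1 Ty.1|)%nat
     * mu p Sx.2 Ty.2)%R.

Definition Ffun (n : nat) (Sx Ty : {set 'I_n} * bv n) : bool := fS Ty.1 Sx.2 Ty.2.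

(* CC_le n p q eps k  <->  CC^{nu_{p,q}}_eps(F) <= k : there is a deterministic
   two-way protocol communicating at most k bits on every input whose output
   differs from F with probability at most eps under nu_{p,q}. *)
Definition CC_le (n : nat) (p q eps : R) (k : nat) : Prop :=
  exists t : proto ({set 'I_n} * bv n) ({set 'I_n} * bv n),
    (forall a b, (bits t a b <= k)%nat) /\
    (Rsum (fun ab : ({set 'I_n} * bv n) * ({set 'I_n} * bv n) =>
       if run t ab.1 ab.2 != Ffun ab.1 ab.2 then nu p q ab.1 ab.2 else R0) <= eps)%R.

Definition UIn (n : nat) := ({ffun bv n * bv n -> bool} * bv n)%type.

(* CCU_le n p q eps k  <->  CCU^{mu_p}_eps(F_q) <= k : there is a public-coin
   protocol (a finitely supported distribution w over deterministic protocols P i)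
   which eps-computes F_q under mu_p and communicates at most k bits for every
   (f,g) in F_q, every (x,y) in the support of mu_p and every coin setting. *)
Definition CCU_le (n : nat) (p q eps : R) (k : nat) : Prop :=
  exists (m : nat) (w : 'I_m -> R) (P : 'I_m -> proto (UIn n) (UIn n)),
    (forall i, 0 <= w i)%R /\ Rsum w = 1%R /\
    (forall f g, Fq q f g ->
       (Rsum (fun i => w i * Rsum (fun xy : bv n * bv n =>
           if run (P i) (f, xy.1) (g, xy.2) != g xy then mu p xy.1 xy.2 else R0))
        <= eps)%R) /\
    (forall f g, Fq q f g -> forall (x y : bv n), (0 < mu p x y)%R ->
       forall i, (bits (P i) (f, x) (g, y) <= k)%nat).

(* Main.v *)
Require Import Defs.
From mathcomp Require Import all_boot.
From Stdlib Require Import Reals.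
From Stdlib Require Import Lra Classical.
From mathcomp Require Import Rstruct.

Open Scope R_scope.

Lemma iter_mult (a : R) k : iter k (Rmult a) 1 = a ^ k.
Proof. by elim: k => //= k ->. Qed.

Lemma prod_if (n : nat) (c : 'I_n -> bool) a b :
  \big[Rmult/1]_(i < n) (if c i then a else b) =
  a ^ #|[set i | c i]| * b ^ (n - #|[set i | c i]|).
Proof.
rewrite (bigID (fun i => i \in [set i | c i])) /=.
rewrite (eq_bigr (fun _ => a)); last by move=> i; rewrite inE => ->.
rewrite [X in _ * X](eq_bigr (fun _ => b)); last by move=> i; rewrite inE => /negbTE ->.
rewrite !big_const iter_mult iter_mult.
congr (_ * _ ^ _).
have h := cardsC [set i | c i]. rewrite card_ord in h.
have e : #|(fun i : 'I_n => i \notin [set i0 | c i0])| = #|~: [set i | c i]|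
  by apply: eq_card => i; rewrite inE.
rewrite e. move: h. set u := #|~: _|. set v := #|[set i | c i]|.
clearbody u v. move=> h; rewrite -h addKn. done.
Qed.

Lemma sum_ham (n : nat) (x : bv n) (a b : R) :
  \big[Rplus/0]_(y : bv n) (a ^ hamming x y * b ^ (n - hamming x y)) = (a + b) ^ n.
Proof.
transitivity (\big[Rmult/1]_(i < n) \big[Rplus/0]_(j : bool) (if x i != j then a else b)).
  rewrite bigA_distr_bigA; apply: eq_bigr => y _; by rewrite prod_if.
rewrite (eq_bigr (fun _ => a + b)); last by move=> i _; rewrite big_bool; case: (x i) => /=; lra.
by rewrite big_const_ord iter_mult.
Qed.

Lemma symdiffE (n : nat) (S T : {set 'I_n}) :
  symdiff S T = [set i | [ffun i => i \in S] i != (i \in T)].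
Proof.
apply/setP => i; rewrite /symdiff !inE ffunE.
by case: (i \in S); case: (i \in T).
Qed.


Lemma sum_symdiff (n : nat) (S : {set 'I_n}) (a b : R) :
  \big[Rplus/0]_(T : {set 'I_n}) (a ^ #|symdiff S T| * b ^ (n - #|symdiff S T|)) = (a + b) ^ n.
Proof.
rewrite (reindex (fun t : bv n => [set i | t i])) /=; last first.
  apply: onW_bij; exists (fun T : {set 'I_n} => [ffun i => i \in T] : bv n).
    by move=> t; apply/ffunP => i; rewrite ffunE inE.
  by move=> T; apply/setP => i; rewrite inE ffunE.
rewrite -(sum_ham n [ffun i => i \in S]); apply: eq_bigr => t _.
have -> : #|symdiff S [set i | t i]| = hamming [ffun i => i \in S] t.
  rewrite symdiffE /hamming; apply: eq_card => i; by rewrite !inE.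
done.
Qed.

Lemma sum_const_bv (n : nat) (c : R) : \big[Rplus/0]_(y : bv n) c = 2 ^ n * c.
Proof.
have := sum_ham n [ffun _ => false] 1 1.
rewrite (eq_bigr (fun _ => 1)); last by move=> y _; rewrite !pow1; lra.
move=> h. rewrite -[c]Rmult_1_l -big_distrl /= h.
replace (1+1) with 2 by lra. lra.
Qed.

Lemma sum_const_set (n : nat) (c : R) : \big[Rplus/0]_(T : {set 'I_n}) c = 2 ^ n * c.
Proof.
have := sum_symdiff n set0 1 1.
rewrite (eq_bigr (fun _ => 1)); last by move=> y _; rewrite !pow1; lra.
move=> h. rewrite -[c]Rmult_1_l -big_distrl /= h.
replace (1+1) with 2 by lra. lra.
Qed.

Lemma Rsum_le (T : finType) (P : pred T) (F G : T -> R) :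
  (forall i, P i -> F i <= G i) ->
  \big[Rplus/0]_(i | P i) F i <= \big[Rplus/0]_(i | P i) G i.
Proof.
move=> H; apply: (big_ind2 (fun x y => x <= y)) => //; [lra | move=> *; lra].
Qed.

Lemma Rsum_ge0 (T : finType) (P : pred T) (F : T -> R) :
  (forall i, P i -> 0 <= F i) -> 0 <= \big[Rplus/0]_(i | P i) F i.
Proof.
move=> H; apply: (big_ind (fun x => 0 <= x)) => //; [lra | move=> *; lra].
Qed.

Fixpoint pmapP (A B A' B' : Type) (ja : A' -> A) (jb : B' -> B) (t : proto A B) : proto A' B' :=
  match t with
  | Out o => Out (fun b => o (jb b))
  | ASend f t0 t1 => ASend (fun a => f (ja a)) (pmapP _ _ _ _ ja jb t0) (pmapP _ _ _ _ ja jb t1)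
  | BSend g t0 t1 => BSend (fun b => g (jb b)) (pmapP _ _ _ _ ja jb t0) (pmapP _ _ _ _ ja jb t1)
  end.
Arguments pmapP {A B A' B'}.

Lemma run_pmapP (A B A' B' : Type) (ja : A' -> A) (jb : B' -> B) t a b :
  run (pmapP ja jb t) a b = run t (ja a) (jb b).
Proof.
elim: t => [o|f t0 IH0 t1 IH1|g t0 IH0 t1 IH1] //=.
  by case: (f (ja a)).
by case: (g (jb b)).
Qed.

Lemma bits_pmapP (A B A' B' : Type) (ja : A' -> A) (jb : B' -> B) t a b :
  bits (pmapP ja jb t) a b = bits t (ja a) (jb b).
Proof.
elim: t => [o|f t0 IH0 t1 IH1|g t0 IH0 t1 IH1] //=.
  by case: (f (ja a)); rewrite ?IH0 ?IH1.
by case: (g (jb b)); rewrite ?IH0 ?IH1.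
Qed.

Fixpoint trunc (A B : Type) (k : nat) (t : proto A B) : proto A B :=
  match t with
  | Out o => Out o
  | ASend f t0 t1 => match k with 0 => Out (fun _ => false)
                     | k'.+1 => ASend f (trunc _ _ k' t0) (trunc _ _ k' t1) end
  | BSend g t0 t1 => match k with 0 => Out (fun _ => false)
                     | k'.+1 => BSend g (trunc _ _ k' t0) (trunc _ _ k' t1) end
  end.
Arguments trunc {A B}.

Lemma bits_trunc (A B : Type) k (t : proto A B) a b : (bits (trunc k t) a b <= k)%nat.
Proof.
elim: t k => [o|f t0 IH0 t1 IH1|g t0 IH0 t1 IH1] [|k] //=.
  by case: (f a); [apply: IH1 | apply: IH0].
by case: (g b); [apply: IH1 | apply: IH0].
Qed.

Lemma run_trunc (A B : Type) k (t : proto A B) a b :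
  (bits t a b <= k)%nat -> run (trunc k t) a b = run t a b.
Proof.
elim: t k => [o|f t0 IH0 t1 IH1|g t0 IH0 t1 IH1] [|k] //=.
  by case: (f a) => H; [apply: IH1 | apply: IH0].
by case: (g b) => H; [apply: IH1 | apply: IH0].
Qed.

Definition wST (n : nat) (q : R) (S T : {set 'I_n}) : R :=
  / 2 ^ n * (q / 2) ^ #|symdiff S T| * (1 - q / 2) ^ (n - #|symdiff S T|).

Lemma sum_wST (n : nat) (q lam : R) :
  \big[Rplus/0]_(S : {set 'I_n}) \big[Rplus/0]_(T : {set 'I_n})
     (wST n q S T * lam ^ #|symdiff S T|) = (lam * (q / 2) + (1 - q / 2)) ^ n.
Proof.
have h2 : 2 ^ n <> 0 by apply: pow_nonzero; lra.
rewrite (eq_bigr (fun S => / 2 ^ n * (lam * (q / 2) + (1 - q / 2)) ^ n)).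
  rewrite sum_const_set; field; done.
move=> S _; rewrite -(sum_symdiff n S) big_distrr; apply: eq_bigr => T _.
rewrite /wST Rpow_mult_distr /=; ring.
Qed.

Lemma sum_mu (n : nat) (p : R) :
  \big[Rplus/0]_(x : bv n) \big[Rplus/0]_(y : bv n) mu p x y = 1.
Proof.
have h2 : 2 ^ n <> 0 by apply: pow_nonzero; lra.
rewrite (eq_bigr (fun _ => / 2 ^ n)).
  rewrite sum_const_bv; field; done.
move=> x _.
transitivity (/ 2 ^ n * \big[Rplus/0]_(y : bv n) (p ^ hamming x y * (1 - p) ^ (n - hamming x y))).
  rewrite big_distrr; apply: eq_bigr => y _; rewrite /mu /=; ring.
rewrite sum_ham; replace (p + (1 - p)) with 1 by ring; rewrite pow1; ring.
Qed.

Lemma sum_lin (n : nat) (q al be a b : R) :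
  \big[Rplus/0]_(S : {set 'I_n}) \big[Rplus/0]_(T : {set 'I_n})
     (al * (wST n q S T * a ^ #|symdiff S T|) + be * (wST n q S T * b ^ #|symdiff S T|))
  = al * (a * (q / 2) + (1 - q / 2)) ^ n + be * (b * (q / 2) + (1 - q / 2)) ^ n.
Proof.
rewrite -!sum_wST !big_distrr -big_split; apply: eq_bigr => S _.
by rewrite !big_distrr -big_split.
Qed.

Lemma sum4 (n : nat) (F : ({set 'I_n} * bv n) -> ({set 'I_n} * bv n) -> R) :
  \big[Rplus/0]_(ab : ({set 'I_n} * bv n) * ({set 'I_n} * bv n)) F ab.1 ab.2 =
  \big[Rplus/0]_(S : {set 'I_n}) \big[Rplus/0]_(T : {set 'I_n})
     \big[Rplus/0]_(x : bv n) \big[Rplus/0]_(y : bv n) F (S, x) (T, y).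
Proof.
rewrite -(pair_bigA _ F).
transitivity (\big[Rplus/0]_(S : {set 'I_n}) \big[Rplus/0]_(x : bv n)
     \big[Rplus/0]_(T : {set 'I_n}) \big[Rplus/0]_(y : bv n) F (S, x) (T, y)); last first.
  by apply: eq_bigr => S _; apply: exchange_big.
rewrite (pair_bigA _ (fun S x => \big[Rplus/0]_(T : {set 'I_n}) \big[Rplus/0]_(y : bv n) F (S, x) (T, y))).
apply: eq_bigr => [[S x]] _ /=.
rewrite (pair_bigA _ (fun T y => F (S, x) (T, y))).
by apply: eq_bigr => [[T y]] _.
Qed.

Lemma exists_le_avg (m : nat) (w E : 'I_m -> R) :
  (forall i, 0 <= w i) -> Rsum w = 1 ->
  exists i, E i <= Rsum (fun i => w i * E i).
Proof.
move=> Hw0 Hw1.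
apply: NNPP => Hn.
set X := Rsum (fun i => w i * E i).
have Hlt : forall i, X < E i.
  move=> i; apply: Rnot_le_lt => H; apply: Hn; by exists i.
have Hsum : \big[Rplus/0]_(i : 'I_m) (w i * (E i - X)) = 0.
  rewrite (eq_bigr (fun i => w i * E i + (- X) * w i)); last by move=> i _; ring.
  rewrite big_split -big_distrr /=.
  change (X + - X * Rsum w = 0). rewrite Hw1; ring.
have Hz : forall j, w j = 0.
  move=> j.
  have : w j * (E j - X) <= 0.
    rewrite -Hsum (bigD1 j) //=.
    rewrite -[X in X <= _]Rplus_0_r. apply: Rplus_le_compat_l.
    apply: Rsum_ge0 => i _; apply: Rmult_le_pos; [apply: Hw0 | have := Hlt i; lra].
  have := Hlt j; have := Hw0 j => h1 h2 h3.
  destruct h1 as [h1|h1]; last by rewrite h1.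
  have : 0 < w j * (E j - X) by apply: Rmult_lt_0_compat; lra.
  lra.
move: Hw1; rewrite /Rsum big1 //; lra.
Qed.

Lemma exp_pow_INR (x : R) (n : nat) : exp x ^ n = exp (INR n * x).
Proof.
elim: n => [|n IH]; first by rewrite /= Rmult_0_l exp_0.
rewrite S_INR -tech_pow_Rmult IH -exp_plus; congr exp; ring.
Qed.

Lemma bad_bound (n : nat) (q : R) (d : nat) :
  ~ (INR d <= q * INR n) -> 1 <= Rpower 2 (- (q * INR n)) * 2 ^ d.
Proof.
move=> H.
have hl := ln_lt_2.
rewrite -Rpower_pow; last lra.
rewrite -Rpower_plus /Rpower.
have : 0 < (- (q * INR n) + INR d) * ln 2 by apply: Rmult_lt_0_compat; lra.
move=> h; have := exp_ineq1_le ((- (q * INR n) + INR d) * ln 2); lra.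
Qed.

Lemma final_bound (n : nat) (q : R) :
  0 < q ->
  Rpower 2 (- (q * INR n)) * (2 * (q / 2) + (1 - q / 2)) ^ n <=
  Rpower 2 (- ((1 - / (2 * ln 2)) * q * INR n)).
Proof.
move=> Hq.
have hl := ln_lt_2.
have e1 : 2 * (q / 2) + (1 - q / 2) = 1 + q / 2 by field.
rewrite e1.
apply: Rle_trans (_ : Rpower 2 (- (q * INR n)) * exp (q / 2) ^ n <= _).
  apply: Rmult_le_compat_l; first by left; apply: exp_pos.
  apply: pow_incr; split; first lra.
  exact: exp_ineq1_le.
rewrite exp_pow_INR /Rpower -exp_plus.
right; congr exp; field; lra.
Qed.

Theorem mainTheorem10 :
  exists c : R, (0 < c)%R /\
    forall (n : nat) (p q eps : R),
      (0 < p < 1)%R -> (0 < q <= 1)%R -> (0 < eps)%R ->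
      forall k : nat,
        CCU_le n p q (1 / 2 - eps) k ->
        CC_le n p q (1 / 2 - eps + Rpower 2 (- (c * q * INR n))) k.
Proof.
have hl := ln_lt_2.
exists (1 - / (2 * ln 2)); split.
  have : / (2 * ln 2) < 1.
    rewrite -Rinv_1; apply: Rinv_lt_contravar; lra.
  lra.
move=> n p q eps Hp Hq He k [m [w [P [Hw0 [Hw1 [Herr Hbits]]]]]].
set jA := fun a : {set 'I_n} * bv n => (fSfun a.1, a.2) : UIn n.
set Q := fun i => trunc k (pmapP jA jA (P i)).
set E := fun i => Rsum (fun ab : ({set 'I_n} * bv n) * ({set 'I_n} * bv n) =>
   if run (Q i) ab.1 ab.2 != Ffun ab.1 ab.2 then nu p q ab.1 ab.2 else R0).
set e := fun i (S T : {set 'I_n}) => Rsum (fun xy : bv n * bv n =>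
   if run (P i) (fSfun S, xy.1) (fSfun T, xy.2) != fSfun T xy then mu p xy.1 xy.2 else R0).
have mupos : forall x y : bv n, 0 < mu p x y.
  move=> x y; rewrite /mu; apply: Rmult_lt_0_compat; [apply: Rmult_lt_0_compat|].
  - apply: Rinv_0_lt_compat; apply: pow_lt; lra.
  - apply: pow_lt; lra.
  - apply: pow_lt; lra.
have wpos : forall S T, 0 <= wST n q S T.
  move=> S T; rewrite /wST; apply: Rmult_le_pos; [apply: Rmult_le_pos|].
  - left; apply: Rinv_0_lt_compat; apply: pow_lt; lra.
  - apply: pow_le; lra.
  - apply: pow_le; lra.
have Hgood : forall S T, INR #|symdiff S T| <= q * INR n ->
    Rsum (fun i => w i * e i S T) <= 1/2 - eps.
  move=> S T g; apply: (Herr (fSfun S) (fSfun T)); by exists S, T.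
have Hhalf : 0 <= 1/2 - eps.
  apply: Rle_trans (Hgood set0 set0 _).
    apply: Rsum_ge0 => i _; apply: Rmult_le_pos; first exact: Hw0.
    apply: Rsum_ge0 => xy _; case: ifP => _; [left; apply: mupos | lra].
  have -> : symdiff (set0 : {set 'I_n}) set0 = set0 by rewrite /symdiff setD0 setU0.
  rewrite cards0 /=; apply: Rmult_le_pos; [lra | apply: pos_INR].
set B := fun i (S T : {set 'I_n}) => wST n q S T *
   (if Rle_dec (INR #|symdiff S T|) (q * INR n) then e i S T else 1).
have step1 : forall i, E i <= \big[Rplus/0]_(S : {set 'I_n}) \big[Rplus/0]_(T : {set 'I_n}) B i S T.
  move=> i; rewrite /E /Rsum.
  rewrite (sum4 n (fun a b => if run (Q i) a b != Ffun a b then nu p q a b else R0)).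
  apply: Rsum_le => S _; apply: Rsum_le => T _.
  rewrite /B; case: Rle_dec => g.
  - have -> : e i S T = \big[Rplus/0]_(x : bv n) \big[Rplus/0]_(y : bv n)
        (if run (P i) (fSfun S, x) (fSfun T, y) != fSfun T (x, y) then mu p x y else R0).
      rewrite /e /Rsum (pair_bigA _ (fun x y => if run (P i) (fSfun S, x) (fSfun T, y) != fSfun T (x, y) then mu p x y else R0)).
      by apply: eq_bigr => [[x y]] _.
    rewrite big_distrr; apply: Rsum_le => x _; rewrite big_distrr; apply: Rsum_le => y _ /=.
    rewrite /Q run_trunc; last first.
      rewrite bits_pmapP; apply: (Hbits (fSfun S) (fSfun T)); [by exists S, T | apply: mupos].
    rewrite run_pmapP /jA /= /Ffun /= ffunE /=.
    case: ifP => _; rewrite /nu /wST /=; right; ring.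
  - rewrite Rmult_1_r -[wST n q S T]Rmult_1_r -(sum_mu n p) big_distrr.
    apply: Rsum_le => x _; rewrite big_distrr; apply: Rsum_le => y _ /=.
    case: ifP => _; rewrite /nu /wST /=.
    + right; ring.
    + apply: Rmult_le_pos; [apply: wpos | left; apply: mupos].
have step2 : Rsum (fun i => w i * E i) <=
   \big[Rplus/0]_(S : {set 'I_n}) \big[Rplus/0]_(T : {set 'I_n})
     (wST n q S T * (if Rle_dec (INR #|symdiff S T|) (q * INR n)
                     then Rsum (fun i => w i * e i S T) else 1)).
  apply: Rle_trans (_ : Rsum (fun i => w i * \big[Rplus/0]_(S : {set 'I_n}) \big[Rplus/0]_(T : {set 'I_n}) B i S T) <= _).
    apply: Rsum_le => i _; apply: Rmult_le_compat_l; [apply: Hw0 | apply: step1].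
  right; rewrite /Rsum.
  rewrite (eq_bigr (fun i => \big[Rplus/0]_(S : {set 'I_n}) \big[Rplus/0]_(T : {set 'I_n}) (w i * B i S T))); last first.
    move=> i _; rewrite big_distrr; apply: eq_bigr => S _; by rewrite big_distrr.
  rewrite exchange_big; apply: eq_bigr => S _.
  rewrite exchange_big; apply: eq_bigr => T _.
  rewrite /B; case: Rle_dec => g.
  - rewrite big_distrr; apply: eq_bigr => i _ /=; ring.
  - transitivity (wST n q S T * Rsum w); last by rewrite Hw1.
    rewrite /Rsum big_distrr; apply: eq_bigr => i _ /=; ring.
set R2 := Rpower 2 (- (q * INR n)).
have step3 : \big[Rplus/0]_(S : {set 'I_n}) \big[Rplus/0]_(T : {set 'I_n})
     (wST n q S T * (if Rle_dec (INR #|symdiff S T|) (q * INR n)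
                     then Rsum (fun i => w i * e i S T) else 1)) <=
   \big[Rplus/0]_(S : {set 'I_n}) \big[Rplus/0]_(T : {set 'I_n})
     ((1/2 - eps) * (wST n q S T * 1 ^ #|symdiff S T|) + R2 * (wST n q S T * 2 ^ #|symdiff S T|)).
  apply: Rsum_le => S _; apply: Rsum_le => T _.
  have hw := wpos S T.
  have hR2 : 0 <= R2 * (wST n q S T * 2 ^ #|symdiff S T|).
    apply: Rmult_le_pos; [left; apply: exp_pos | apply: Rmult_le_pos; [done | apply: pow_le; lra]].
  rewrite pow1.
  case: Rle_dec => g /=.
  - have := Hgood S T g => hg.
    have := Rmult_le_compat_l _ _ _ hw hg => h. apply: Rle_trans h _. rewrite Rmult_1_r (Rmult_comm (1/2 - eps)). apply: (Rle_trans _ _ _ _ (Rplus_le_compat_l _ _ _ hR2)). right; ring.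
  - have hb := bad_bound n q _ g.
    have h2 := Rmult_le_compat_l _ _ _ hw hb.
    apply: Rle_trans h2 _.
    have h1 : 0 <= (1/2 - eps) * (wST n q S T * 1) by apply: Rmult_le_pos; lra.
    apply: (Rle_trans _ _ _ _ (Rplus_le_compat_r _ _ _ h1)).
    apply: Req_le. rewrite /R2. move: (wST n q S T) => W. set D := (2 ^ _). move: D => D. ring.
rewrite sum_lin in step3.
have ex := exists_le_avg m w E Hw0 Hw1.
case: ex => i Hi.
exists (Q i); split.
  move=> a b; exact: bits_trunc.
change (E i <= 1 / 2 - eps + Rpower 2 (- ((1 - / (2 * ln 2)) * q * INR n))).
have hf := final_bound n q Hq.1.
have e1 : 1 * (q / 2) + (1 - q / 2) = 1 by field.
rewrite e1 pow1 in step3.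
rewrite -/R2 in hf.
lra.
Qed.
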